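(* Let $\mathbb{K}$ be a field with $|\mathbb{K}|>2$ and let $(X,Z,\Xi,\Theta)$ be a dual split pre-Veronese set. Let $L_1,L_2$ be singular lines, neither contained in $Y$, meeting in exactly one point. Then either the plane $\langle L_1,L_2\rangle$ is singular, or $L_1$ and $L_2$ are contained in a unique member of $\Xi\cup\Theta$.
   Context: Let $\mathbb{K}$ be a field. For integers $R\ge1$, $V\ge -1$, an $(R,V)$-cone is a cone with a $V$-dimensional vertex (empty if $V=-1$) over a non-degenerate hyperbolic quadric in $\mathbb{P}^{2R+1}(\mathbb{K})$; the $(R,V)$-tube is the cone minus its vertex. Let $r,v,r',v'\ge -1$ be integers with $r'>r\ge1$, $d=2r+v+1$, $d'=2r'+v'+1$. Let $X,Z$ be point sets with $X\cup Z$ spanning $\mathbb{P}^N(\mathbb{K})$, $Y:=\langle Z\rangle$; $\Xi$ a family of $(d+1)$-dimensional subspaces with $|\Xi|>1$, $\Theta$ a possibly empty family of $(d'+1)$-dimensional subspaces such that: for $\xi\in\Xi$, $(X\cup Y)\cap\xi$ is an $(r,v)$-cone with vertex $Y\cap\xi$ and $X\cap\xi$ is its tube; for $\theta\in\Theta$, $(X\cup Y)\cap\theta$ is an $(r',v')$-cone $C_\theta$, $Y\cap\theta$ is a generator $M$ of $C_\theta$, $Z\cap\theta$ is the disjoint union of the vertex $V_\theta$ and an $r'$-space of $M$ complementary to $V_\theta$, and $X\cap\theta=C_\theta\setminus M$. A subspace is singular if all its points lie in $X\cup Y$; two points are collinear if the joining line is singular. Axioms: (S1) any two distinct points of $X\cup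 Z$ lie in a common member of $\Xi\cup\Theta$; (S2) the intersection of two distinct members of $\Xi\cup\Theta$ is singular. A dual split pre-Veronese set (pre-DSV) is such a quadruple satisfying (S1) and (S2). *)

(* Defs.v *)
From HB Require Import structures.
From mathcomp Require Import all_boot all_order all_algebra.
Set Implicit Arguments. Unset Strict Implicit. Unset Printing Implicit Defensive.
Import GRing.Theory Num.Theory.
Local Open Scope ring_scope.

(* Projective space P^N(K) is modelled by the K-vector space 'rV[K]_(N+1):
   a projective subspace of projective dimension k is a vector subspace of
   dimension k+1 (a {vspace _}); points are 1-dimensional subspaces.
   A point set is a predicate on subspaces, only ever evaluated at points. *)

Section ProjectiveSetting.
Variables (K : fieldType) (N : nat).
Local Notation V := 'rV[K]_N.+1.

Definition pset := {vspace V} -> Prop.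

Definition is_point (p : {vspace V}) : Prop := \dim p = 1%N.
Definition is_line (L : {vspace V}) : Prop := \dim L = 2%N.

Definition is_span (Z : pset) (Y : {vspace V}) : Prop :=
  (forall p, is_point p -> Z p -> (p <= Y)%VS) /\
  (forall U : {vspace V}, (forall p, is_point p -> Z p -> (p <= U)%VS) -> (Y <= U)%VS).

Definition hyp_form (R : nat) (a : 'rV[K]_(R.*2.+2)) : K :=
  \sum_(i < R.+1) a 0 (inord (i.*2)) * a 0 (inord (i.*2.+1)).

(* C (a point set in the subspace xi) is an (R,v)-cone with vertex W:
   W has projective dimension v, and there is a linear map f mapping xi onto
   K^(2R+2) with kernel (in xi) W such that the points of C are exactly the
   points <x> of xi with hyp_form (f x) = 0 (cone with vertex W over a
   non-degenerate hyperbolic quadric of P^(2R+1)). *)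
Definition is_cone (R : nat) (v : int) (xi W : {vspace V}) (C : pset) : Prop :=
  (\dim W)%:Z = v + 1 /\ (W <= xi)%VS /\
  (forall p, is_point p -> C p -> (p <= xi)%VS) /\
  exists f : 'Hom(V, 'rV[K]_(R.*2.+2)),
    (f @: xi)%VS = fullv /\ (xi :&: lker f)%VS = W /\
    forall p, is_point p -> (p <= xi)%VS ->
      (C p <-> forall x, x \in p -> hyp_form (f x) = 0).

(* M is a generator (maximal singular subspace, of projective dimension R+v+1)
   of the (R,v)-cone C with vertex W *)
Definition is_generator (R : nat) (v : int) (C : pset) (W M : {vspace V}) : Prop :=
  (W <= M)%VS /\ (\dim M)%:Z = R%:Z + v + 2 /\
  (forall p, is_point p -> (p <= M)%VS -> C p).

Definition singular (X : pset) (Y S : {vspace V}) : Prop :=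
  forall p, is_point p -> (p <= S)%VS -> X p \/ (p <= Y)%VS.

Definition dd (r : nat) (v : int) : int := 2 * r%:Z + v + 1.

Definition pre_DSV (r : nat) (v : int) (r' : nat) (v' : int)
    (X Z : pset) (Y : {vspace V}) (Xi Theta : {vspace V} -> Prop) : Prop :=
  (forall U : {vspace V},
     (forall p, is_point p -> X p \/ Z p -> (p <= U)%VS) -> U = fullv) /\
  is_span Z Y /\
  (exists xi1 xi2, Xi xi1 /\ Xi xi2 /\ xi1 <> xi2) /\
  (forall xi, Xi xi ->
     (\dim xi)%:Z = dd r v + 2 /\
     let C := fun p => (p <= xi)%VS /\ (X p \/ (p <= Y)%VS) in
     is_cone r v xi (Y :&: xi)%VS C /\
     (forall p, is_point p -> (p <= xi)%VS ->
        (X p <-> C p /\ ~ (p <= Y :&: xi)%VS))) /\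
  (forall th, Theta th ->
     (\dim th)%:Z = dd r' v' + 2 /\
     let C := fun p => (p <= th)%VS /\ (X p \/ (p <= Y)%VS) in
     exists Vt M S : {vspace V},
       is_cone r' v' th Vt C /\
       is_generator r' v' C Vt M /\
       (Y :&: th)%VS = M /\
       (S <= M)%VS /\ \dim S = r'.+1 /\
       (S :&: Vt)%VS = 0%VS /\ (S + Vt)%VS = M /\
       (forall p, is_point p -> (p <= th)%VS ->
          (Z p <-> (p <= Vt)%VS \/ (p <= S)%VS)) /\
       (forall p, is_point p -> (p <= th)%VS ->
          (X p <-> C p /\ ~ (p <= M)%VS))) /\
  (forall p q, is_point p -> is_point q -> X p \/ Z p -> X q \/ Z q -> p <> q ->
     exists mu, (Xi mu \/ Theta mu) /\ (p <= mu)%VS /\ (q <= mu)%VS) /\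
  (forall mu1 mu2, Xi mu1 \/ Theta mu1 -> Xi mu2 \/ Theta mu2 -> mu1 <> mu2 ->
     singular X Y (mu1 :&: mu2)%VS).

End ProjectiveSetting.

(* Main.v *)
Require Import Defs.
From HB Require Import structures.
From mathcomp Require Import all_boot all_order all_algebra.
From mathcomp Require Import ring.
From Stdlib Require Import Classical.
Import GRing.Theory Num.Theory.
Set Implicit Arguments. Unset Strict Implicit.
Local Open Scope ring_scope.

Definition hbil (K : fieldType) (R : nat) (a b : 'rV[K]_(R.*2.+2)) : K :=
  \sum_(i < R.+1) (a 0 (inord (i.*2)) * b 0 (inord (i.*2.+1))
                   + b 0 (inord (i.*2)) * a 0 (inord (i.*2.+1))).

Lemma hyp_comb (K : fieldType) (R : nat) (a b : 'rV[K]_(R.*2.+2)) (x y : K) :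
 hyp_form (x *: a + y *: b) = x^+2 * hyp_form a + y^+2 * hyp_form b + x*y * hbil a b.
Proof.
rewrite /hyp_form /hbil !mulr_sumr -!big_split /=; apply: eq_bigr => i _; rewrite !mxE; ring.
Qed.

Lemma hyp_scale (K : fieldType) (R : nat) (a : 'rV[K]_(R.*2.+2)) (x : K) :
 hyp_form (x *: a) = x^+2 * hyp_form a.
Proof.
rewrite /hyp_form !mulr_sumr; apply: eq_bigr => i _; rewrite !mxE; ring.
Qed.

Lemma cone_quad (K : fieldType) (N R : nat) (v : int) (X : pset K N)
  (Y mu W : {vspace 'rV[K]_N.+1}) :
  is_cone R v mu W (fun p => (p <= mu)%VS /\ (X p \/ (p <= Y)%VS)) ->
  exists f : 'Hom('rV[K]_N.+1, 'rV[K]_(R.*2.+2)), forall u, u \in mu -> u != 0 ->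
    ((X <[u]>%VS \/ (<[u]> <= Y)%VS) <-> hyp_form (f u) = 0).
Proof.
move=> [_ [_ [_ [f [_ [_ Hf]]]]]]; exists f => u Hu nz.
have Hp : is_point <[u]>%VS by rewrite /is_point dim_vline nz.
have Hs : (<[u]> <= mu)%VS by rewrite -memvE.
have [H1 H2] := Hf _ Hp Hs; split.
- by move=> Hsg; apply: (H1 (conj Hs Hsg)); exact: memv_line.
- move=> H0; apply: (proj2 (H2 _)).
  by move=> y /vlineP [k ->]; rewrite linearZ hyp_scale H0 mulr0.
Qed.

Lemma memvZ_inv (K : fieldType) (vT : vectType K) (U : {vspace vT}) (u : vT) (k : K) :
  k != 0 -> k *: u \in U -> u \in U.
Proof. by move=> k0 h; rewrite -(scale1r u) -(mulVf k0) -scalerA memvZ. Qed.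

Lemma memv_lin2 (K : fieldType) (vT : vectType K) (U : {vspace vT}) (x e : vT) (a b : K) :
  b != 0 -> a *: x + b *: e \in U -> x \in U -> e \in U.
Proof.
move=> b0 h xU; apply: (memvZ_inv b0).
have -> : b *: e = (a *: x + b *: e) - a *: x by rewrite addrC addKr.
by rewrite memvB // memvZ.
Qed.

Lemma pick2 (K : fieldType) (P Q : K -> Prop) :
  (exists a : K, a != 0 /\ a != 1) ->
  (forall t t', P t -> P t' -> t = t') -> (forall t t', Q t -> Q t' -> t = t') ->
  exists t, ~ P t /\ ~ Q t.
Proof.
move=> [a [a0 a1]] hP hQ; apply: NNPP => H.
have H' : forall t, P t \/ Q t.
  move=> t; apply: NNPP => h; apply: H; exists t; split => h'; apply: h; tauto.
have e01 : (0 : K) <> 1 by move/eqP; rewrite eq_sym oner_eq0.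
have e0a : (0 : K) <> a by move/eqP; rewrite eq_sym (negbTE a0).
have e1a : (1 : K) <> a by move/eqP; rewrite eq_sym (negbTE a1).
have := H' 0; have := H' 1; have := H' a.
have := hP 0 1; have := hP 0 a; have := hP 1 a.
have := hQ 0 1; have := hQ 0 a; have := hQ 1 a.
tauto.
Qed.

Definition comb (K : fieldType) (vT : vectType K) (x0 e1 e2 : vT) (l m n : K) : vT :=
  l *: x0 + m *: e1 + n *: e2.

Lemma combD (K : fieldType) (vT : vectType K) (x0 e1 e2 : vT) l m n l' m' n' :
  comb x0 e1 e2 l m n + comb x0 e1 e2 l' m' n' = comb x0 e1 e2 (l + l') (m + m') (n + n').
Proof. by rewrite /comb !scalerDl addrACA [X in X + _ = _]addrACA. Qed.

Lemma combZ (K : fieldType) (vT : vectType K) (x0 e1 e2 : vT) k l m n :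
  k *: comb x0 e1 e2 l m n = comb x0 e1 e2 (k * l) (k * m) (k * n).
Proof. by rewrite /comb !scalerDr !scalerA. Qed.

Lemma combB (K : fieldType) (vT : vectType K) (x0 e1 e2 : vT) l m n l' m' n' :
  comb x0 e1 e2 l m n - comb x0 e1 e2 l' m' n' = comb x0 e1 e2 (l - l') (m - m') (n - n').
Proof. by rewrite -scaleN1r combZ combD !mulN1r. Qed.

Lemma mem_comb (K : fieldType) (vT : vectType K) (U : {vspace vT}) (x0 e1 e2 : vT) l m n :
  x0 \in U -> e1 \in U -> e2 \in U -> comb x0 e1 e2 l m n \in U.
Proof. by move=> h0 h1 h2; rewrite /comb !memvD // memvZ. Qed.

Lemma span2 (K : fieldType) (vT : vectType K) (L : {vspace vT}) (x0 e1 : vT) :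
  \dim L = 2%N -> x0 \in L -> e1 \in L -> x0 != 0 -> e1 \notin <[x0]>%VS ->
  L = (<[x0]> + <[e1]>)%VS.
Proof.
move=> dL x0L e1L nz ne; apply/eqP; rewrite eq_sym eqEdim subv_add -!memvE x0L e1L /= dL.
have [le eq] := dimv_leqif_eq (addvSl <[x0]> <[e1]>).
rewrite dim_vline nz in le eq.
rewrite ltn_neqAle eq le andbT; apply/eqP => E.
have := memv_add (mem0v <[x0]>%VS) (memv_line e1).
by rewrite add0r -E => h; rewrite h in ne.
Qed.

Theorem lemma4p3 (K : fieldType) (N : nat) (r r' : nat) (v v' : int)
    (X Z : pset K N) (Y : {vspace 'rV[K]_N.+1})
    (Xi Theta : {vspace 'rV[K]_N.+1} -> Prop)
    (L1 L2 : {vspace 'rV[K]_N.+1}) :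
  (exists a : K, a != 0 /\ a != 1) ->
  (1 <= r)%N -> (r < r')%N -> -1 <= v -> -1 <= v' ->
  pre_DSV r v r' v' X Z Y Xi Theta ->
  is_line L1 -> is_line L2 ->
  singular X Y L1 -> singular X Y L2 ->
  ~ (L1 <= Y)%VS -> ~ (L2 <= Y)%VS ->
  is_point (L1 :&: L2)%VS ->
  singular X Y (L1 + L2)%VS \/
  exists! mu, (Xi mu \/ Theta mu) /\ (L1 <= mu)%VS /\ (L2 <= mu)%VS.
Proof.
move=> Ka _ _ _ _ [_ [_ [_ [HXi [HTh [S1 S2]]]]]] HL1 HL2 sL1 sL2 nL1 nL2 Hx.
rewrite /is_line in HL1 HL2; rewrite /is_point in Hx.
have singL : forall L, singular X Y L -> forall u, u \in L -> u != 0 ->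
    X <[u]>%VS \/ (<[u]> <= Y)%VS.
  move=> L sL u uL nz; apply: sL; first by rewrite /is_point dim_vline nz.
  by rewrite -memvE.
have quad : forall mu, Xi mu \/ Theta mu -> exists R,
    exists f : 'Hom('rV[K]_N.+1, 'rV[K]_(R.*2.+2)), forall u, u \in mu -> u != 0 ->
    ((X <[u]>%VS \/ (<[u]> <= Y)%VS) <-> hyp_form (f u) = 0).
  move=> mu [Hm|Hm].
  - have := HXi mu Hm; cbv zeta; case=> _ [Hc _].
    by have [f Hf] := cone_quad Hc; exists r, f.
  - have := HTh mu Hm; cbv zeta; case=> _ [Vt [M [S [Hc _]]]].
    by have [f Hf] := cone_quad Hc; exists r', f.
have S2' : forall mu nu w, Xi mu \/ Theta mu -> Xi nu \/ Theta nu ->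
    w \in mu -> w \in nu -> w != 0 -> ~ (X <[w]>%VS \/ (<[w]> <= Y)%VS) -> mu = nu.
  move=> mu nu w Hm Hn wm wn nz ns; apply: NNPP => Hne; apply: ns.
  apply: (S2 _ _ Hm Hn Hne); first by rewrite /is_point dim_vline nz.
  by rewrite -memvE memv_cap wm wn.
set x0 := vpick (L1 :&: L2)%VS.
have x0nz : x0 != 0.
  by rewrite vpick0; apply/eqP => H; rewrite H dimv0 in Hx.
have [x0L1 x0L2] : x0 \in L1 /\ x0 \in L2 by apply/memv_capP; exact: memv_pick.
have [e1 e1L1 e1n] : exists2 e1, e1 \in L1 & e1 \notin <[x0]>%VS.
  apply/subvPn; apply/negP => H; have := dimvS H; by rewrite dim_vline x0nz HL1.
have [e2 e2L2 e2n] : exists2 e2, e2 \in L2 & e2 \notin <[x0]>%VS.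
  apply/subvPn; apply/negP => H; have := dimvS H; by rewrite dim_vline x0nz HL2.
have L1eq := span2 HL1 x0L1 e1L1 x0nz e1n.
have L2eq := span2 HL2 x0L2 e2L2 x0nz e2n.
have e2n1 : e2 \notin L1.
  apply/negP => h.
  have E : L2 = L1.
    apply/eqP; rewrite eqEdim HL1 HL2 leqnn andbT L2eq subv_add -!memvE h.
    by rewrite x0L1.
  by move: Hx; rewrite E capvv HL1.
have comb_eq0 : forall l m n, comb x0 e1 e2 l m n = 0 -> [/\ l = 0, m = 0 & n = 0].
  move=> l m n H; rewrite /comb in H.
  have n0 : n = 0.
    apply/eqP; apply: contraR e2n1 => nn; apply: (memvZ_inv nn).
    have -> : n *: e2 = - (l *: x0 + m *: e1).
      by apply/eqP; rewrite -addr_eq0 addrC H.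
    by rewrite rpredN memvD // memvZ.
  rewrite n0 scale0r addr0 in H.
  have m0 : m = 0.
    apply/eqP; apply: contraR e1n => mn; apply: (memvZ_inv mn).
    have -> : m *: e1 = - (l *: x0) by apply/eqP; rewrite -addr_eq0 addrC H.
    by rewrite rpredN memvZ // memv_line.
  rewrite m0 scale0r addr0 in H.
  by move/eqP: H; rewrite scaler_eq0 (negbTE x0nz) orbF => /eqP.
have comb_inj : forall l m n l' m' n', comb x0 e1 e2 l m n = comb x0 e1 e2 l' m' n' ->
    [/\ l = l', m = m' & n = n'].
  move=> l m n l' m' n' /eqP; rewrite -subr_eq0 combB => /eqP /comb_eq0 [].
  by move=> /eqP; rewrite subr_eq0 => /eqP -> /eqP; rewrite subr_eq0 => /eqP -> /eqP;
    rewrite subr_eq0 => /eqP ->.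
case: (classic (singular X Y (L1 + L2)%VS)) => [hs|hns]; first by left.
right.
have [p [pp [ppi [nX nY]]]] : exists p, is_point p /\ (p <= L1 + L2)%VS /\ ~ X p /\ ~ (p <= Y)%VS.
  apply: NNPP => hne; apply: hns => p pp ppi; apply: NNPP => h; apply: hne.
  by exists p; split => //; split => //; split => h'; apply: h; [left|right].
rewrite /is_point in pp.
set z0 := vpick p.
have z0nz : z0 != 0 by rewrite vpick0; apply/eqP => H; rewrite H dimv0 in pp.
have pE : p = <[z0]>%VS.
  by apply/eqP; rewrite eq_sym eqEdim -memvE memv_pick /= dim_vline z0nz pp.
have z0pi : z0 \in (L1 + L2)%VS by rewrite memvE -pE.
have nsz : ~ (X <[z0]>%VS \/ (<[z0]> <= Y)%VS) by rewrite -pE; case.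
have [lam [mu1 [nu1 z0E]]] : exists l m n, z0 = comb x0 e1 e2 l m n.
  move/memv_addP: z0pi => [u1 u1L [u2 u2L ->]].
  move: u1L; rewrite L1eq => /memv_addP [a1 /vlineP [l1 ->] [b1 /vlineP [m ->] ->]].
  move: u2L; rewrite L2eq => /memv_addP [a2 /vlineP [l2 ->] [b2 /vlineP [n ->] ->]].
  by exists (l1 + l2), (m + 0), (0 + n); rewrite -combD /comb !scale0r !addr0.
have mu1nz : mu1 != 0.
  apply/eqP => m0; apply: nsz; apply: (singL _ sL2) => //.
  by rewrite z0E m0 /comb scale0r addr0 memvD // memvZ.
have nu1nz : nu1 != 0.
  apply/eqP => n0; apply: nsz; apply: (singL _ sL1) => //.
  by rewrite z0E n0 /comb scale0r addr0 memvD // memvZ.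
pose A t := comb x0 e1 e2 t mu1 0.
pose B s := comb x0 e1 e2 s 0 nu1.
have AL1 : forall t, A t \in L1 by move=> t; rewrite /A /comb scale0r addr0 memvD // memvZ.
have BL2 : forall t, B t \in L2 by move=> t; rewrite /B /comb scale0r addr0 memvD // memvZ.
have Anz : forall t, A t != 0.
  by move=> t; apply/eqP => /comb_eq0 [_ m0 _]; rewrite m0 eqxx in mu1nz.
have Bnz : forall t, B t != 0.
  by move=> t; apply/eqP => /comb_eq0 [_ _ n0]; rewrite n0 eqxx in nu1nz.
have PY1 : forall t t', (<[A t]> <= Y)%VS -> (<[A t']> <= Y)%VS -> t = t'.
  move=> t t'; rewrite -!memvE => h h'; apply: NNPP => tt; apply: nL1.
  have x0Y : x0 \in Y.
    apply: (@memvZ_inv _ _ _ _ (t - t')); first by rewrite subr_eq0; apply/eqP.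
    have -> : (t - t') *: x0 = A t - A t' by rewrite /A combB !subrr /comb !scale0r !addr0.
    by rewrite memvB.
  have e1Y : e1 \in Y.
    by apply: (@memv_lin2 _ _ Y x0 e1 t mu1 mu1nz _ x0Y); move: h; rewrite /A /comb scale0r addr0.
  by rewrite L1eq subv_add -!memvE x0Y e1Y.
have QY1 : forall t t', (<[B t]> <= Y)%VS -> (<[B t']> <= Y)%VS -> t = t'.
  move=> t t'; rewrite -!memvE => h h'; apply: NNPP => tt; apply: nL2.
  have x0Y : x0 \in Y.
    apply: (@memvZ_inv _ _ _ _ (t - t')); first by rewrite subr_eq0; apply/eqP.
    have -> : (t - t') *: x0 = B t - B t' by rewrite /B combB !subrr /comb !scale0r !addr0.
    by rewrite memvB.
  have e2Y : e2 \in Y.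
    by apply: (@memv_lin2 _ _ Y x0 e2 t nu1 nu1nz _ x0Y); move: h; rewrite /B /comb scale0r addr0.
  by rewrite L2eq subv_add -!memvE x0Y e2Y.
have [t [nPt nQt]] := pick2 (P := fun t => (<[A t]> <= Y)%VS)
    (Q := fun t => (<[B (lam - t)]> <= Y)%VS) Ka PY1
    (fun a b ha hb => oppr_inj (addrI _ (QY1 _ _ ha hb))).
set s := lam - t.
have XA : X <[A t]>%VS by case: (singL _ sL1 _ (AL1 t) (Anz t)).
have XB : X <[B s]>%VS by case: (singL _ sL2 _ (BL2 s) (Bnz s)).
have ptA : forall t, is_point <[A t]>%VS by move=> u; rewrite /is_point dim_vline Anz.
have ptB : forall t, is_point <[B t]>%VS by move=> u; rewrite /is_point dim_vline Bnz.
have neqAB : forall t s, <[A t]>%VS <> <[B s]>%VS.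
  move=> u w E; have : A u \in <[B w]>%VS by rewrite -E memv_line.
  move/vlineP => [k]; rewrite /A /B combZ => /comb_inj [_ m0 _].
  by rewrite mulr0 in m0; rewrite m0 eqxx in mu1nz.
have [mu [Hm [Am Bm]]] := S1 _ _ (ptA t) (ptB s) (or_introl XA) (or_introl XB) (neqAB t s).
rewrite -!memvE in Am Bm.
have zE : z0 = A t + B s.
  rewrite z0E /A /B combD; congr comb;
    [by rewrite /s addrC subrK | by rewrite addr0 | by rewrite add0r].
have z0m : z0 \in mu by rewrite zE memvD.
have [R [f Hf]] := quad mu Hm.
have QA : hyp_form (f (A t)) = 0 := (Hf _ Am (Anz t)).1 (or_introl XA).
have QB : hyp_form (f (B s)) = 0 := (Hf _ Bm (Bnz s)).1 (or_introl XB).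
have Qz : hyp_form (f z0) != 0 by apply/eqP => h; apply: nsz; exact: (Hf _ z0m z0nz).2 h.
have Qz' := hyp_comb (f (A t)) (f (B s)) 1 1.
rewrite QA QB !scale1r -linearD -zE expr1n !mulr0 !add0r !mul1r in Qz'.
have [t' [nPt' tt']] := pick2 (P := fun t' => (<[A t']> <= Y)%VS) (Q := fun t' => t' = t) Ka PY1
  (fun a b ha hb => etrans ha (esym hb)).
have [s' [nQs' ss']] := pick2 (P := fun s' => (<[B s']> <= Y)%VS) (Q := fun s' => s' = s) Ka QY1
  (fun a b ha hb => etrans ha (esym hb)).
have XA' : X <[A t']>%VS by case: (singL _ sL1 _ (AL1 t') (Anz t')).
have XB' : X <[B s']>%VS by case: (singL _ sL2 _ (BL2 s') (Bnz s')).
have [nu [Hn [An Bn]]] := S1 _ _ (ptA t') (ptB s') (or_introl XA') (or_introl XB') (neqAB t' s').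
rewrite -!memvE in An Bn.
pose w := (s' - s) *: A t + (t - t') *: B s.
have wE : w = (s' - s) *: A t' + (t - t') *: B s'.
  by rewrite /w /A /B !combZ !combD; congr comb; ring.
have wm : w \in mu by rewrite /w memvD // memvZ.
have wn : w \in nu by rewrite wE memvD // memvZ.
have wnz : w != 0.
  apply/eqP; rewrite /w /A /B !combZ combD => /comb_eq0 [_ m0 _].
  rewrite mulr0 addr0 in m0; move/eqP: m0; rewrite mulf_eq0 subr_eq0 (negbTE mu1nz) orbF.
  by move/eqP.
have nsw : ~ (X <[w]>%VS \/ (<[w]> <= Y)%VS).
  move/(Hf _ wm wnz).1; rewrite /w linearD !linearZ /= hyp_comb QA QB !mulr0 !add0r.
  move/eqP; rewrite !mulf_eq0 !subr_eq0 -Qz' (negbTE Qz) orbF.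
  by case/orP => /eqP ?; [apply: ss' | apply: tt'].
have E := S2' _ _ _ Hm Hn wm wn wnz nsw.
rewrite -E in An Bn.
have x0m : x0 \in mu.
  apply: (@memvZ_inv _ _ _ _ (t - t')); first by rewrite subr_eq0 eq_sym; apply/eqP.
  have -> : (t - t') *: x0 = A t - A t' by rewrite /A combB !subrr /comb !scale0r !addr0.
  by rewrite memvB.
have e1m : e1 \in mu.
  by apply: (@memv_lin2 _ _ mu x0 e1 t mu1 mu1nz _ x0m); move: Am; rewrite /A /comb scale0r addr0.
have e2m : e2 \in mu.
  by apply: (@memv_lin2 _ _ mu x0 e2 s nu1 nu1nz _ x0m); move: Bm; rewrite /B /comb scale0r addr0.
have L1m : (L1 <= mu)%VS by rewrite L1eq subv_add -!memvE x0m e1m.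
have L2m : (L2 <= mu)%VS by rewrite L2eq subv_add -!memvE x0m e2m.
exists mu; split; first by split => //; split.
move=> mu' [Hm' [H1' H2']].
apply: (S2' _ _ z0 Hm Hm' z0m _ z0nz nsz).
have H : (L1 + L2 <= mu')%VS by rewrite subv_add H1' H2'.
by move/subvP: H; apply.
Qed.
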